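(* Let $X$ be a countably infinite set and let $A$ be a finite set. Then the lattice $\mathrm{Cl}(A)$ of all clones on $A$ is isomorphic to an interval of the lattice $\mathrm{Cl}_{loc}(X)$ of local clones on $X$.
   Context: For a set $Y$ and $n\ge1$, an $n$-ary operation on $Y$ is a map $Y^n\to Y$. A clone on $Y$ is a set of finitary operations on $Y$ containing all projections $\pi^n_k(x_1,\dots,x_n)=x_k$ and closed under composition (if $f$ is $n$-ary in the set and $g_1,\dots,g_n$ are $m$-ary in the set then $f(g_1,\dots,g_n)$ is in the set); $\mathrm{Cl}(Y)$ is the lattice of all clones on $Y$ ordered by inclusion. Giving $X$ the discrete topology and $X^{X^n}$ the product topology, a clone on $X$ is local if for each $n$ its set of $n$-ary operations is closed in $X^{X^n}$; equivalently, an $n$-ary operation $g$ belongs to the clone whenever for every finite $B\subseteq X^n$ some $n$-ary operation of the clone agrees with $g$ on $B$. $\mathrm{Cl}_{loc}(X)$ is the complete lattice of local clones on $X$ ordered by inclusion. An interval of a lattice is a set $\{c: a\le c\le b\}$ for some $a\le b$, with the induced order. *)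

(* Defs.v *)
From mathcomp Require Import all_boot.
Set Implicit Arguments. Unset Strict Implicit. Unset Printing Implicit Defensive.

(* An (n+1)-ary operation on Y (arities n >= 1 are indexed by n.+1). *)
Definition op (Y : Type) (n : nat) : Type := ('I_n.+1 -> Y) -> Y.

Definition opset (Y : Type) : Type := forall n : nat, op Y n -> Prop.

Definition opset_le (Y : Type) (C D : opset Y) : Prop :=
  forall n (f : op Y n), C n f -> D n f.

Definition opset_eq (Y : Type) (C D : opset Y) : Prop :=
  forall n (f : op Y n), C n f <-> D n f.

Definition is_clone (Y : Type) (C : opset Y) : Prop :=
  (forall n (k : 'I_n.+1), C n (fun x => x k)) /\
  (forall n m (f : op Y n) (g : 'I_n.+1 -> op Y m),
      C n f -> (forall i, C m (g i)) ->
      C m (fun x => f (fun i => g i x))).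

(* Local clones: closed in the product topology (finite agreement).
   A finite set B of arguments is given as a finite family B : 'I_k -> Y^(n+1). *)
Definition is_local_clone (Y : Type) (C : opset Y) : Prop :=
  is_clone C /\
  forall n (g : op Y n),
    (forall (k : nat) (B : 'I_k -> ('I_n.+1 -> Y)),
        exists f : op Y n, C n f /\ forall j : 'I_k, f (B j) = g (B j)) ->
    C n g.

(* Main.v *)
Require Import Defs.
From mathcomp Require Import all_boot.
From Stdlib Require Import ClassicalEpsilon FunctionalExtensionality.
Set Implicit Arguments. Unset Strict Implicit. Unset Printing Implicit Defensive.

Lemma fchoice (I B : Type) (P : I -> B -> Prop) :
  (forall i, exists b, P i b) -> exists g : I -> B, forall i, P i (g i).
Proof.
move=> H; exists (fun i => proj1_sig (constructive_indefinite_description _ (H i))).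
move=> i; exact: proj2_sig.
Qed.

Definition phi (X A : Type) (iota : A -> X) (C : opset A) : opset X :=
  fun n f => exists c, C n c /\ forall a, f (fun i => iota (a i)) = iota (c a).

Lemma phi_local (X : Type) (A : finType) (iota : A -> X) (C : opset A) :
  is_clone C -> is_local_clone (phi iota C).
Proof.
move=> [Cp Cc]; split; [split|].
- move=> n k; exists (fun a => a k); split => //; exact: Cp.
- move=> n m f g [cf [Cf Hf]] Hg.
  have [cg Hcg] := @fchoice _ _ (fun i c => C m c /\ forall a, g i (fun j => iota (a j)) = iota (c a)) Hg.
  exists (fun a => cf (fun i => cg i a)); split.
  + apply: Cc => // i; exact: (Hcg i).1.
  + move=> a /=; rewrite -Hf; congr f; apply: functional_extensionality => i /=.
    exact: (Hcg i).2.
- move=> n g Hg.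
  have [f [[c [Cc' Hc]] Hfg]] := Hg _ (fun (j : 'I_#|{ffun 'I_n.+1 -> A}|) i => iota (enum_val j i)).
  exists c; split => // a.
  have := Hfg (enum_rank [ffun i => a i]); rewrite enum_rankK.
  have E : (fun i => iota ([ffun i => a i] i)) = (fun i => iota (a i)).
    by apply: functional_extensionality => i; rewrite ffunE.
  by rewrite E => <-.
Qed.

Definition Proj (A : Type) : opset A := fun n c => exists k, forall a, c a = a k.
Definition Top (A : Type) : opset A := fun _ _ => True.

Lemma Proj_clone A : is_clone (@Proj A).
Proof.
split.
- by move=> n k; exists k.
- move=> n m f g [k Hk] Hg; have [j Hj] := Hg k.
  by exists j => a; rewrite Hk Hj.
Qed.

Lemma Top_clone A : is_clone (@Top A).
Proof. by split. Qed.

Definition consG (X : Type) (n : nat) (d : op X n) : 'I_n.+2 -> op X n :=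
  fun i => match unlift ord0 i with None => d | Some j => fun x => x j end.
Arguments consG : simpl never.

Lemma consG0 X n (d : op X n) : consG d ord0 = d.
Proof. by rewrite /consG unlift_none. Qed.

Lemma consGS X n (d : op X n) i x : consG d (lift ord0 i) x = x i.
Proof. by rewrite /consG liftK. Qed.

Definition hext (X A : Type) (iota : A -> X) (n : nat) (f : op X n) : op X n.+1 :=
  fun z => match excluded_middle_informative
                   (exists a : 'I_n.+1 -> A, forall i, z (lift ord0 i) = iota (a i)) with
           | left _ => z ord0
           | right _ => f (fun i => z (lift ord0 i)) end.

Lemma hext_img X A (iota : A -> X) n (f : op X n) (b : 'I_n.+2 -> A) :
  hext iota f (fun i => iota (b i)) = iota (b ord0).
Proof.
rewrite /hext; case: excluded_middle_informative => // [[]].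
by exists (fun i => b (lift ord0 i)).
Qed.

Lemma hext_comp X A (iota : A -> X) n (f d : op X n) x :
  (forall a, (forall i, x i = iota (a i)) -> d x = f x) ->
  hext iota f (fun i => consG d i x) = f x.
Proof.
move=> H; rewrite /hext.
have T : (fun i => consG d (lift ord0 i) x) = x.
  by apply: functional_extensionality => i; rewrite consGS.
case: excluded_middle_informative => [[a Ha]|_].
- rewrite consG0; apply: (H a) => i; by rewrite -Ha consGS.
- by rewrite T.
Qed.

Definition fext (X A : Type) (iota : A -> X) (x0 : X) (n : nat) (c : op A n) : op X n :=
  fun x => match excluded_middle_informative
                   (exists a : 'I_n.+1 -> A, forall i, x i = iota (a i)) with
           | left H => iota (c (proj1_sig (constructive_indefinite_description _ H)))
           | right _ => x0 end.

Lemma fext_img X A (iota : A -> X) (inj : injective iota) x0 n (c : op A n) a :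
  fext iota x0 c (fun i => iota (a i)) = iota (c a).
Proof.
rewrite /fext; case: excluded_middle_informative => [H|[]]; last by exists a.
case: (constructive_indefinite_description _ H) => a' Ha' /=.
congr (iota (c _)); apply: functional_extensionality => i.
by apply: inj; rewrite -Ha'.
Qed.

Theorem proposition2p2 (X : Type) (e : nat -> X) (e_bij : bijective e)
  (A : finType) :
  exists (L U : opset X),
    is_local_clone L /\ is_local_clone U /\ opset_le L U /\
    exists phi : opset A -> opset X,
      (forall C, is_clone C ->
         is_local_clone (phi C) /\ opset_le L (phi C) /\ opset_le (phi C) U) /\
      (forall D, is_local_clone D -> opset_le L D -> opset_le D U ->
         exists C, is_clone C /\ opset_eq (phi C) D) /\
      (forall C D, is_clone C -> is_clone D ->
         (opset_le C D <-> opset_le (phi C) (phi D))).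
Proof.
pose iota := fun a : A => e (enum_rank a).
have inj : injective iota.
  move=> a b /(bij_inj e_bij) H; apply: enum_rank_inj; exact: val_inj.
have LleC : forall C, is_clone C -> opset_le (phi iota (@Proj A)) (phi iota C).
  move=> C [Cp _] n f [c [[k Hk] H]]; exists (fun a => a k); split; first exact: Cp.
  by move=> a; rewrite H Hk.
exists (phi iota (@Proj A)), (phi iota (@Top A)).
split; first exact: phi_local (Proj_clone A).
split; first exact: phi_local (Top_clone A).
split; first exact: LleC (Top_clone A).
exists (phi iota); split.
  move=> C HC; split; first exact: phi_local.
  split; first exact: LleC.
  by move=> n f [c [_ H]]; exists c.
split.
- move=> D [[Dp Dc] _] HL HU.
  exists (fun n c => exists d, D n d /\ forall a, d (fun i => iota (a i)) = iota (c a)).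
  split.
    split.
      by move=> n k; exists (fun x => x k); split => //; exact: Dp.
    move=> n m f g [df [Df Hf]] Hg.
    have [dg Hdg] := @fchoice _ _ (fun i d => D m d /\ forall a, d (fun j => iota (a j)) = iota (g i a)) Hg.
    exists (fun x => df (fun i => dg i x)); split.
      apply: Dc => // i; exact: (Hdg i).1.
    move=> a /=; rewrite -Hf; congr df; apply: functional_extensionality => i /=.
    exact: (Hdg i).2.
  move=> n f; split.
    move=> [c [[d [Dd Hd]] Hf]].
    have Hh : D n.+1 (hext iota f).
      apply: HL; exists (fun b => b ord0); split; first by exists ord0.
      by move=> b; rewrite hext_img.
    have HG : forall i, D n (consG d i).
      move=> i; rewrite /consG; case: (unlift ord0 i) => [j|] //; exact: Dp.
    have := Dc _ _ _ _ Hh HG.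
    have -> : (fun x => hext iota f (fun i => consG d i x)) = f => //.
    apply: functional_extensionality => x; apply: hext_comp => a Ha.
    have -> : x = (fun i => iota (a i)) by apply: functional_extensionality.
    by rewrite Hd Hf.
  move=> Df; have [c [_ Hc]] := HU _ _ Df.
  exists c; split => //; exists f; split => //.
- move=> C D HC HD; split.
    by move=> HCD n f [c [Cc H]]; exists c; split => //; apply: HCD.
  move=> HCD n c Cc.
  have [|c' [Dc' H]] := HCD n (fext iota (e 0) c).
    by exists c; split => // a; rewrite (fext_img inj).
  have -> : c = c' => //.
  apply: functional_extensionality => a; apply: (inj).
  by rewrite -H (fext_img inj).
Qed.
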